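(* Let $\kappa$ be an uncountable regular cardinal, let $\mathcal{I}$ be a $\kappa$-complete proper ideal on $\kappa$ containing every bounded subset of $\kappa$, and let $\nu\in\{2,\kappa\}$. For every function $\Phi\colon{}^{\kappa}\nu\to{}^{\kappa}\nu$ that is continuous with respect to $\tau_{\mathcal{I}}$ on both sides, there is a continuous $\varphi\colon\mathrm{Fn}_{\mathcal{I}}({}^{\kappa}\nu)\to\mathrm{Fn}_{\mathcal{I}}({}^{\kappa}\nu)$ with $\varphi^*=\Phi$.
   Context: ${}^{\kappa}\nu$ is the set of functions $\kappa\to\nu$, $\mathrm{Fn}_{\mathcal{I}}({}^{\kappa}\nu)$ the set of functions $f\colon D\to\nu$ with $D\in\mathcal{I}$, $\mathbf{N}_f=\{x:f\subseteq x\}$, and $\tau_{\mathcal{I}}$ the topology on ${}^{\kappa}\nu$ generated by the sets $\mathbf{N}_f$. A map $\varphi\colon\mathrm{Fn}_{\mathcal{I}}\to\mathrm{Fn}_{\mathcal{I}}$ is monotone if $f\subseteq g$ implies $\varphi(f)\subseteq\varphi(g)$; it is continuous if it is monotone and for all $x\in{}^{\kappa}\nu$ and $D\in\mathcal{I}$ there is $E\in\mathcal{I}$ with $D\subseteq\mathrm{dom}(\varphi(x\restriction E))$. For continuous $\varphi$, $\varphi^*(x)$ is the limit $\lim_{D\in\mathcal{I}}\varphi(x\restriction D)$ over the directed set $(\mathcal{I},\subseteq)$, i.e. the unique $z\in{}^{\kappa}\nu$ such that for every $D\in\mathcal{I}$ there is $E\in\mathcal{I}$ with $z\restriction D=\varphi(x\restriction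 E')\restriction D$ for all $E'\in\mathcal{I}$ with $E\subseteq E'$. *)

(* Defs.v *)
From Stdlib Require Import Classical ClassicalEpsilon.

Set Implicit Arguments.

Definition card_le (A B : Type) : Prop :=
  exists f : A -> B, forall a a', f a = f a' -> a = a'.
Definition card_lt (A B : Type) : Prop := card_le A B /\ ~ card_le B A.

Definition strict_well_order (K : Type) (lt : K -> K -> Prop) : Prop :=
  (forall x, ~ lt x x) /\
  (forall x y z, lt x y -> lt y z -> lt x z) /\
  (forall x y, lt x y \/ x = y \/ lt y x) /\
  well_founded lt.

(* K with lt is (the order type of) a cardinal: every proper initial segment
   has strictly smaller cardinality. *)
Definition is_cardinal (K : Type) (lt : K -> K -> Prop) : Prop :=
  strict_well_order lt /\ forall x : K, card_lt {y : K | lt y x} K.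

Definition uncountable (K : Type) : Prop := ~ card_le K nat.

Definition bounded (K : Type) (lt : K -> K -> Prop) (A : K -> Prop) : Prop :=
  exists b : K, forall y, A y -> lt y b.

Definition regular (K : Type) (lt : K -> K -> Prop) : Prop :=
  forall A : K -> Prop, card_lt {y : K | A y} K -> bounded lt A.

Definition uncountable_regular_cardinal (K : Type) (lt : K -> K -> Prop) : Prop :=
  is_cardinal lt /\ uncountable K /\ regular lt.

Definition subset_of (K : Type) (A B : K -> Prop) : Prop := forall x, A x -> B x.

Definition is_ideal (K : Type) (I : (K -> Prop) -> Prop) : Prop :=
  I (fun _ => False) /\
  (forall A B, I B -> subset_of A B -> I A) /\
  (forall A B, I A -> I B -> I (fun x => A x \/ B x)).

Definition kappa_complete (K : Type) (I : (K -> Prop) -> Prop) : Prop :=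
  forall (J : Type) (F : J -> K -> Prop),
    card_lt J K -> (forall j, I (F j)) -> I (fun x => exists j, F j x).

Definition proper_ideal (K : Type) (I : (K -> Prop) -> Prop) : Prop :=
  ~ I (fun _ => True).

Definition contains_bounded (K : Type) (lt : K -> K -> Prop)
  (I : (K -> Prop) -> Prop) : Prop :=
  forall A, bounded lt A -> I A.

(* A partial function K -> V is represented as K -> option V. *)
Definition dom (K V : Type) (f : K -> option V) : K -> Prop :=
  fun k => f k <> None.

Definition Fn (K V : Type) (I : (K -> Prop) -> Prop) (f : K -> option V) : Prop :=
  I (dom f).

Definition pf_sub (K V : Type) (f g : K -> option V) : Prop :=
  forall k v, f k = Some v -> g k = Some v.

Definition pf_sub_total (K V : Type) (f : K -> option V) (x : K -> V) : Prop :=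
  forall k v, f k = Some v -> x k = v.

Definition Nbhd (K V : Type) (f : K -> option V) : (K -> V) -> Prop :=
  fun x => pf_sub_total f x.

Definition restr (K V : Type) (x : K -> V) (E : K -> Prop) : K -> option V :=
  fun k => if excluded_middle_informative (E k) then Some (x k) else None.

Definition generated_open (X : Type) (B : (X -> Prop) -> Prop) (U : X -> Prop) : Prop :=
  forall O : (X -> Prop) -> Prop,
    (forall b, B b -> O b) ->
    O (fun _ => True) ->
    (forall F : (X -> Prop) -> Prop, (forall A, F A -> O A) ->
        O (fun x => exists A, F A /\ A x)) ->
    (forall A1 A2, O A1 -> O A2 -> O (fun x => A1 x /\ A2 x)) ->
    O U.

Definition tauI_basic (K V : Type) (I : (K -> Prop) -> Prop) (U : (K -> V) -> Prop) : Prop :=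
  exists f : K -> option V, Fn I f /\ forall x, U x <-> Nbhd f x.

Definition tauI_open (K V : Type) (I : (K -> Prop) -> Prop) (U : (K -> V) -> Prop) : Prop :=
  generated_open (tauI_basic I) U.

Definition tauI_continuous (K V : Type) (I : (K -> Prop) -> Prop)
  (Phi : (K -> V) -> (K -> V)) : Prop :=
  forall U, tauI_open I U -> tauI_open I (fun x => U (Phi x)).

(* phi is given on all partial functions; only its behaviour on Fn_I matters *)
Definition maps_Fn (K V : Type) (I : (K -> Prop) -> Prop)
  (phi : (K -> option V) -> (K -> option V)) : Prop :=
  forall f, Fn I f -> Fn I (phi f).

Definition monotone_Fn (K V : Type) (I : (K -> Prop) -> Prop)
  (phi : (K -> option V) -> (K -> option V)) : Prop :=
  forall f g, Fn I f -> Fn I g -> pf_sub f g -> pf_sub (phi f) (phi g).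

Definition continuous_Fn (K V : Type) (I : (K -> Prop) -> Prop)
  (phi : (K -> option V) -> (K -> option V)) : Prop :=
  monotone_Fn I phi /\
  forall (x : K -> V) (D : K -> Prop), I D ->
    exists E, I E /\ subset_of D (dom (phi (restr x E))).

(* z = lim_{D in I} phi (x|D) *)
Definition is_phi_limit (K V : Type) (I : (K -> Prop) -> Prop)
  (phi : (K -> option V) -> (K -> option V)) (x z : K -> V) : Prop :=
  forall D, I D -> exists E, I E /\
    forall E', I E' -> subset_of E E' ->
      forall k, D k -> phi (restr x E') k = Some (z k).

Definition phi_star_eq (K V : Type) (I : (K -> Prop) -> Prop)
  (phi : (K -> option V) -> (K -> option V)) (Phi : (K -> V) -> (K -> V)) : Prop :=
  forall x, is_phi_limit I phi x (Phi x).

Definition conclusion (K V : Type) (I : (K -> Prop) -> Prop) : Prop :=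
  forall Phi : (K -> V) -> (K -> V), tauI_continuous I Phi ->
    exists phi : (K -> option V) -> (K -> option V),
      maps_Fn I phi /\ continuous_Fn I phi /\ phi_star_eq I phi Phi.

(* Main.v *)
Require Import Defs.
From Stdlib Require Import Classical ClassicalEpsilon.

Section Gen.
Variables (K V : Type) (I : (K -> Prop) -> Prop).
Hypothesis hI : is_ideal I.

Lemma restr_Some (x : K -> V) E k v : restr x E k = Some v -> E k /\ x k = v.
Proof. unfold restr. destruct (excluded_middle_informative (E k)); intro H;
  [injection H; auto | discriminate]. Qed.

Lemma restr_in (x : K -> V) E k : E k -> restr x E k = Some (x k).
Proof. unfold restr. destruct (excluded_middle_informative (E k)); tauto. Qed.

Lemma I_sub A B : I B -> subset_of A B -> I A.
Proof. destruct hI as [_ [H _]]. eauto. Qed.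

Lemma I_union A B : I A -> I B -> I (fun x => A x \/ B x).
Proof. destruct hI as [_ [_ H]]. eauto. Qed.

Lemma Fn_restr (x : K -> V) E : I E -> Fn I (restr x E).
Proof. intro HE. apply (@I_sub _ E HE). intros k Hk. unfold dom in Hk.
  destruct (restr x E k) eqn:Q; [ now apply restr_Some in Q | congruence]. Qed.

Lemma Nbhd_restr (x : K -> V) E : Nbhd (restr x E) x.
Proof. intros k v H. now apply restr_Some in H. Qed.

Lemma open_interior (U : (K -> V) -> Prop) : tauI_open I U -> forall x, U x ->
  exists h, Fn I h /\ Nbhd h x /\ forall y, Nbhd h y -> U y.
Proof.
  intro HU. apply HU.
  - intros b [f [Hf Hb]] x Hx. exists f. split; [exact Hf|]. split.
    + now apply Hb. + intros y Hy; now apply Hb.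
  - intros x _. exists (fun _ => None). split.
    + destruct hI as [H0 _]. apply (@I_sub _ _ H0). intros k Hk. apply Hk; reflexivity.
    + split. intros k v H; discriminate. auto.
  - intros F HF x [A [HA Ax]]. destruct (HF A HA x Ax) as [h [Hh [Hx Hy]]].
    exists h. repeat split; auto. intros y Hy'. exists A. auto.
  - intros A1 A2 H1 H2 x [x1 x2].
    destruct (H1 x x1) as [h1 [F1 [N1 Y1]]]. destruct (H2 x x2) as [h2 [F2 [N2 Y2]]].
    exists (restr x (fun k => dom h1 k \/ dom h2 k)). split; [apply Fn_restr, I_union; auto|].
    split; [apply Nbhd_restr|]. intros y Hy. split.
    + apply Y1. intros k v Hk. assert (x k = v) by (apply N1; auto).
      rewrite <- H. apply Hy. apply restr_in. left. unfold dom. congruence.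
    + apply Y2. intros k v Hk. assert (x k = v) by (apply N2; auto).
      rewrite <- H. apply Hy. apply restr_in. right. unfold dom. congruence.
Qed.

Variable Phi : (K -> V) -> (K -> V).

Definition phiP (f : K -> option V) (k : K) : Prop :=
  exists v, forall y, Nbhd f y -> Phi y k = v.

Definition phi (f : K -> option V) (k : K) : option V :=
  match f k with
  | None => None
  | Some _ => match excluded_middle_informative (phiP f k) with
              | left H => Some (proj1_sig (constructive_indefinite_description _ H))
              | right _ => None
              end
  end.

Lemma phi_Some f k v : phi f k = Some v ->
  f k <> None /\ forall y, Nbhd f y -> Phi y k = v.
Proof.
  unfold phi. destruct (f k) eqn:Q; [|discriminate].
  destruct (excluded_middle_informative (phiP f k)) as [H|H]; [|discriminate].
  destruct (constructive_indefinite_description _ H) as [w Hw]. simpl.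
  intro E; injection E; intros; subst. split; [congruence | auto].
Qed.

Lemma phi_intro f k v : f k <> None -> (forall y, Nbhd f y -> Phi y k = v) ->
  (exists y, Nbhd f y) -> phi f k = Some v.
Proof.
  intros Hk Hy [y0 Hy0]. unfold phi. destruct (f k) eqn:Q; [|congruence].
  destruct (excluded_middle_informative (phiP f k)) as [H|H].
  - destruct (constructive_indefinite_description _ H) as [w Hw]. simpl.
    rewrite <- (Hw y0 Hy0). now rewrite (Hy y0 Hy0).
  - exfalso. apply H. exists v. exact Hy.
Qed.

Definition ext (g : K -> option V) (d : V) : K -> V :=
  fun k => match g k with Some v => v | None => d end.

Lemma Nbhd_ext g d : Nbhd g (ext g d).
Proof. intros k v H. unfold ext. now rewrite H. Qed.

Lemma phi_dom f : subset_of (dom (phi f)) (dom f).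
Proof. intros k Hk. unfold dom in *. destruct (phi f k) eqn:Q; [|congruence].
  now apply phi_Some in Q. Qed.

Hypothesis HPhi : tauI_continuous I Phi.

Lemma key (x : K -> V) D : I D -> exists E, I E /\ subset_of D E /\
  forall E', subset_of E E' -> forall y, Nbhd (restr x E') y -> forall k, D k -> Phi y k = Phi x k.
Proof.
  intro HD.
  set (U := Nbhd (restr (Phi x) D)).
  assert (HU : tauI_open I U).
  { intros O HB _ _ _. apply HB. exists (restr (Phi x) D). split; [now apply Fn_restr|].
    intro; unfold U; tauto. }
  destruct (open_interior _ (HPhi U HU) x (Nbhd_restr _ _)) as [h [Fh [Nh Yh]]].
  exists (fun k => dom h k \/ D k). split; [now apply I_union|]. split; [intros k; auto|].
  intros E' HE' y Hy k Hk.
  assert (Hyh : Nbhd h y).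
  { intros k' v Hv. assert (x k' = v) by (apply Nh; auto). rewrite <- H.
    apply Hy. apply restr_in. apply HE'. left. unfold dom. congruence. }
  specialize (Yh y Hyh). apply Yh. now apply restr_in.
Qed.

Lemma gen_conclusion : exists phi : (K -> option V) -> (K -> option V),
      maps_Fn I phi /\ continuous_Fn I phi /\ phi_star_eq I phi Phi.
Proof.
  exists phi. split; [|split; [split|]].
  - intros f Hf. exact (@I_sub _ _ Hf (phi_dom f)).
  - intros f g _ _ Hfg k v Hv. apply phi_Some in Hv as [Hk Hy].
    apply phi_intro.
    + destruct (f k) eqn:Q; [|congruence]. rewrite (Hfg _ _ Q). discriminate.
    + intros y Hy'. apply Hy. intros k' v' H'. apply Hy'. auto.
    + exists (ext g v). apply Nbhd_ext.
  - intros x D HD. destruct (key x D HD) as [E [HE [DE HK]]]. exists E. split; auto.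
    intros k Hk. unfold dom. rewrite (phi_intro (restr x E) k (Phi x k)); [discriminate| | |].
    + rewrite restr_in; [discriminate| auto].
    + intros y Hy. apply (HK E); auto. intros z; auto.
    + exists x. apply Nbhd_restr.
  - intros x D HD. destruct (key x D HD) as [E [HE [DE HK]]]. exists E. split; auto.
    intros E' HE' HEE' k Hk. apply phi_intro.
    + rewrite restr_in; [discriminate| auto].
    + intros y Hy. apply (HK E'); auto.
    + exists x. apply Nbhd_restr.
Qed.
End Gen.

Theorem proposition3p3 (K : Type) (lt : K -> K -> Prop)
  (I : (K -> Prop) -> Prop) :
  uncountable_regular_cardinal lt ->
  is_ideal I -> kappa_complete I -> proper_ideal I -> contains_bounded lt I ->
  (* nu = 2 *) conclusion bool I /\ (* nu = kappa *) conclusion K I.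
Proof.
  intros _ hI _ _ _. split; intros Phi HPhi; now apply gen_conclusion.
Qed.
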